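(* For every set $\Gamma\subseteq\mathcal{L}(\boxdot)$ and every $\phi\in\mathcal{L}(\boxdot)$, the following are equivalent: (a) $\Gamma\vdash_{{\bf K4^\boxdot}}\phi$; (b) $\Gamma\vDash_{qt}\phi$; (c) $\Gamma\vDash_{pt}\phi$.
   Context: Fix a nonempty set $\mathbf{P}$ of propositional variables. A bimodal model is $\langle S,R_1,R_2,V\rangle$ with $S$ nonempty, $R_1,R_2\subseteq S\times S$, $V:\mathbf{P}\to\mathcal{P}(S)$. $\mathcal{L}(\boxdot):\ \phi::=p\mid\neg\phi\mid(\phi\wedge\phi)\mid\boxdot\phi$. Truth: $\mathcal{M},s\vDash\boxdot\phi$ iff for all $t,u$ with $sR_1t$ and $sR_2u$, ($\mathcal{M},t\vDash\phi\iff\mathcal{M},u\vDash\phi$); atoms and Booleans as usual. ${\bf K^\boxdot}$ has axioms: all instances of propositional tautologies; $\boxdot\top$; $\boxdot\phi\leftrightarrow\boxdot\neg\phi$; $\boxdot\phi\wedge\boxdot\psi\to\boxdot(\phi\wedge\psi)$; $\boxdot\phi\to\boxdot(\phi\vee\psi)\vee\boxdot(\neg\phi\vee\chi)$; rules: modus ponens and RE: from $\phi\leftrightarrow\psi$ infer $\boxdot\phi\leftrightarrow\boxdot\psi$. ${\bf K4^\boxdot}$ is ${\bf K^\boxdot}$ plus the axiom schema $\boxdot\phi\to\boxdot(\boxdot\phi\vee\psi)$. A bimodal frame/model is $qt$ (quasi-transitive) if for all $i,j\in\{1,2\}$ and all $x,y,z$: $xR_iy\wedge yR_jz\to xR_jz$;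 it is $pt$ (pseudo-transitive) if for all $i,j\in\{1,2\}$ and all $x,y,z$: $xR_iy\wedge yR_jz\to xR_1z\wedge xR_2z$. $\Gamma\vDash_{qt}\phi$ means: for every $qt$-model $\mathcal{M}$ and state $s$, if all of $\Gamma$ is true at $s$ then $\phi$ is true at $s$; similarly $\vDash_{pt}$. $\Gamma\vdash\phi$ means some finite conjunction of members of $\Gamma$ provably implies $\phi$. *)

(* Defs.v *)
From Stdlib Require Import List.
Import ListNotations.

Section Syntax.
Variable P : Type.

Inductive form : Type :=
| Var : P -> form
| Neg : form -> form
| And : form -> form -> form
| Box : form -> form.

Definition Or (a b : form) : form := Neg (And (Neg a) (Neg b)).
Definition Imp (a b : form) : form := Neg (And a (Neg b)).
Definition Iff (a b : form) : form := And (Imp a b) (Imp b a).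

Fixpoint beval (v : form -> bool) (f : form) : bool :=
  match f with
  | Var _ => v f
  | Box _ => v f
  | Neg a => negb (beval v a)
  | And a b => andb (beval v a) (beval v b)
  end.

Definition tautology (f : form) : Prop := forall v : form -> bool, beval v f = true.

(* The set P of variables is nonempty: p0 is a witness, used to define top. *)
Definition Top (p0 : P) : form := Neg (And (Var p0) (Neg (Var p0))).

Inductive PrfK4 (p0 : P) : form -> Prop :=
| ax_taut : forall f, tautology f -> PrfK4 p0 f
| ax_top : PrfK4 p0 (Box (Top p0))
| ax_neg : forall f, PrfK4 p0 (Iff (Box f) (Box (Neg f)))
| ax_and : forall f g, PrfK4 p0 (Imp (And (Box f) (Box g)) (Box (And f g)))
| ax_or : forall f g h,
    PrfK4 p0 (Imp (Box f) (Or (Box (Or f g)) (Box (Or (Neg f) h))))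
| ax_4 : forall f g, PrfK4 p0 (Imp (Box f) (Box (Or (Box f) g)))
| r_mp : forall f g, PrfK4 p0 (Imp f g) -> PrfK4 p0 f -> PrfK4 p0 g
| r_re : forall f g, PrfK4 p0 (Iff f g) -> PrfK4 p0 (Iff (Box f) (Box g)).

Fixpoint bigAnd (p0 : P) (l : list form) : form :=
  match l with
  | [] => Top p0
  | f :: l' => And f (bigAnd p0 l')
  end.

Definition derivK4 (p0 : P) (Gamma : form -> Prop) (phi : form) : Prop :=
  exists l : list form, (forall g, In g l -> Gamma g) /\ PrfK4 p0 (Imp (bigAnd p0 l) phi).

Fixpoint sat {S : Type} (R1 R2 : S -> S -> Prop) (V : P -> S -> Prop)
    (s : S) (f : form) : Prop :=
  match f with
  | Var p => V p s
  | Neg a => ~ sat R1 R2 V s a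
  | And a b => sat R1 R2 V s a /\ sat R1 R2 V s b
  | Box a => forall t u, R1 s t -> R2 s u ->
      (sat R1 R2 V t a <-> sat R1 R2 V u a)
  end.

Definition rel_i {S : Type} (R1 R2 : S -> S -> Prop) (i : bool) : S -> S -> Prop :=
  if i then R1 else R2.

Definition quasi_transitive {S : Type} (R1 R2 : S -> S -> Prop) : Prop :=
  forall (i j : bool) (x y z : S),
    rel_i R1 R2 i x y -> rel_i R1 R2 j y z -> rel_i R1 R2 j x z.

Definition pseudo_transitive {S : Type} (R1 R2 : S -> S -> Prop) : Prop :=
  forall (i j : bool) (x y z : S),
    rel_i R1 R2 i x y -> rel_i R1 R2 j y z -> R1 x z /\ R2 x z.

Definition conseq_qt (Gamma : form -> Prop) (phi : form) : Prop :=
  forall (S : Type) (R1 R2 : S -> S -> Prop) (V : P -> S -> Prop) (s : S),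
    quasi_transitive R1 R2 ->
    (forall g, Gamma g -> sat R1 R2 V s g) -> sat R1 R2 V s phi.

Definition conseq_pt (Gamma : form -> Prop) (phi : form) : Prop :=
  forall (S : Type) (R1 R2 : S -> S -> Prop) (V : P -> S -> Prop) (s : S),
    pseudo_transitive R1 R2 ->
    (forall g, Gamma g -> sat R1 R2 V s g) -> sat R1 R2 V s phi.

End Syntax.

Arguments Var {P}. Arguments Neg {P}. Arguments And {P}. Arguments Box {P}.

(* Main.v *)
Require Import Defs.
From Stdlib Require Import List Classical ClassicalEpsilon FunctionalExtensionality PropExtensionality Bool.
Import ListNotations.

Definition gcons {T : Type} (bad : list T -> Prop) (A : T -> Prop) :=
  forall l, (forall x, In x l -> A x) -> ~ bad l.
Definition sub {T : Type} (A B : T -> Prop) := forall x, A x -> B x.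
Definition ext1 {T : Type} (A : T -> Prop) (x : T) := fun y => A y \/ y = x.

Definition gstep {T : Type} (bad : list T -> Prop) (A : T -> Prop) : T -> Prop :=
  match excluded_middle_informative (exists x, ~ A x /\ gcons bad (ext1 A x)) with
  | left H => ext1 A (proj1_sig (constructive_indefinite_description _ H))
  | right _ => A end.

Lemma gstep_sub {T} bad (A : T -> Prop) : sub A (gstep bad A).
Proof. unfold gstep. destruct excluded_middle_informative; intros x Hx; auto. left; auto. Qed.

Lemma gstep_cons {T} bad (A : T -> Prop) : gcons bad A -> gcons bad (gstep bad A).
Proof. intro H. unfold gstep. destruct excluded_middle_informative as [e|]; auto.
  destruct (constructive_indefinite_description _ e) as [x [Hx1 Hx2]]. exact Hx2. Qed.

Lemma gstep_max {T} bad (A : T -> Prop) : sub (gstep bad A) A ->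
  forall x, ~ A x -> ~ gcons bad (ext1 A x).
Proof. intros Hs x Hx Hc. unfold gstep in Hs. destruct excluded_middle_informative as [e|n].
  - destruct (constructive_indefinite_description _ e) as [y [Hy1 Hy2]]. simpl in Hs.
    apply Hy1, Hs. right; reflexivity.
  - apply n. exists x; auto. Qed.

Inductive Tw {T} (bad : list T -> Prop) (A0 : T -> Prop) : (T -> Prop) -> Prop :=
 | tw_step : forall A, Tw bad A0 A -> Tw bad A0 (gstep bad A)
 | tw_sup : forall C : (T -> Prop) -> Prop, (forall A, C A -> Tw bad A0 A) ->
     Tw bad A0 (fun x => A0 x \/ exists A, C A /\ A x).

Lemma tw_A0 {T} bad (A0 A : T -> Prop) : Tw bad A0 A -> sub A0 A.
Proof. induction 1; intros x Hx. apply gstep_sub; auto. left; auto. Qed.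

Lemma set_ext {T} (A B : T -> Prop) : sub A B -> sub B A -> A = B.
Proof. intros H1 H2. extensionality x. apply propositional_extensionality; split; auto. Qed.

Definition normal {T} bad (A0 c : T -> Prop) :=
  forall x, Tw bad A0 x -> sub x c -> sub c x \/ sub (gstep bad x) c.

Lemma L1 {T} bad (A0 c : T -> Prop) : Tw bad A0 c -> normal bad A0 c ->
  forall x, Tw bad A0 x -> sub x c \/ sub (gstep bad c) x.
Proof.
  intros Hc Hn x Hx. induction Hx as [A HA IH | C HC IH].
  - destruct IH as [H|H].
    + destruct (Hn A HA H) as [H'|H'].
      * assert (A = c) by (apply set_ext; auto). subst. right. intros y Hy; auto.
      * left; auto.
    + right. intros y Hy. apply gstep_sub. auto.
  - destruct (classic (exists A, C A /\ sub (gstep bad c) A)) as [[A [HA1 HA2]]|Hno].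
    + right. intros y Hy. right. exists A. auto.
    + left. intros y [Hy|[A [HA Hy]]].
      * apply (tw_A0 bad A0 c Hc); auto.
      * destruct (IH A HA) as [H|H]; auto. exfalso; apply Hno; eauto.
Qed.

Lemma L2 {T} bad (A0 : T -> Prop) : forall c, Tw bad A0 c -> normal bad A0 c.
Proof.
  induction 1 as [c Hc IH | C HC IH].
  - intros x Hx Hsub. destruct (L1 bad A0 c Hc IH x Hx) as [H|H].
    + destruct (IH x Hx H) as [H'|H'].
      * assert (x = c) by (apply set_ext; auto). subst. right. intros y Hy; auto.
      * right. intros y Hy. apply gstep_sub; auto.
    + left; auto.
  - intros x Hx Hsub.
    destruct (classic (sub (fun x => A0 x \/ exists A, C A /\ A x) x)) as [Hs|Hs]; [left; auto|right].
    destruct (classic (exists A, C A /\ ~ sub (gstep bad A) x)) as [[A [HA1 HA2]]|Hno].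
    + destruct (L1 bad A0 A (HC A HA1) (IH A HA1) x Hx) as [H|H]; [|contradiction].
      destruct (IH A HA1 x Hx H) as [H'|H'].
      * assert (E : A = x) by (apply set_ext; auto). subst A.
        destruct (classic (exists B, C B /\ sub (gstep bad x) B)) as [[B [HB1 HB2]]|Hno2].
        -- intros y Hy. right. exists B; auto.
        -- exfalso. apply Hs. intros y [Hy|[B [HB Hy]]].
           ++ apply (tw_A0 bad A0 x Hx); auto.
           ++ destruct (L1 bad A0 x Hx (IH x HA1) B (HC B HB)) as [H2|H2]; auto.
              exfalso; apply Hno2; eauto.
      * intros y Hy. right. exists A. auto.
    + exfalso. apply Hs. intros y [Hy|[A [HA Hy]]].
      * apply (tw_A0 bad A0 x Hx); auto.
      * destruct (classic (sub (gstep bad A) x)) as [H|H].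
        -- apply H, gstep_sub; auto.
        -- exfalso; apply Hno; eauto.
Qed.

Lemma tw_chain {T} bad (A0 A B : T -> Prop) : Tw bad A0 A -> Tw bad A0 B -> sub A B \/ sub B A.
Proof. intros HA HB. destruct (L1 bad A0 A HA (L2 bad A0 A HA) B HB) as [H|H]; auto.
  left. intros x Hx. apply H, gstep_sub; auto. Qed.

Lemma tw_cons {T} bad (A0 A : T -> Prop) : gcons bad A0 -> Tw bad A0 A -> gcons bad A.
Proof.
  intros H0. induction 1 as [A HA IH | C HC IH].
  - apply gstep_cons; auto.
  - intros l Hl.
    assert (Hex : exists Y, (Y = A0 \/ C Y) /\ forall x, In x l -> Y x).
    { clear H0. induction l as [|a l IHl].
      - exists A0. split; [left; auto|intros x []].
      - destruct IHl as [Y [HY1 HY2]]. { intros x Hx; apply Hl; right; auto. }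
        assert (Ha := Hl a (or_introl eq_refl)).
        assert (HYsup : sub A0 Y).
        { destruct HY1 as [->|HY]. intros x; auto. apply (tw_A0 bad A0); auto. }
        destruct Ha as [Ha|[A [HA Ha]]].
        + exists Y. split; auto. intros x [<-|Hx]; auto.
        + destruct HY1 as [->|HY].
          * exists A. split; auto. intros x [<-|Hx]; auto. apply (tw_A0 bad A0); auto.
          * destruct (tw_chain bad A0 A Y (HC A HA) (HC Y HY)) as [H|H].
            -- exists Y. split; auto. intros x [<-|Hx]; auto.
            -- exists A. split; auto. intros x [<-|Hx]; auto. }
    destruct Hex as [Y [[->|HY] HY2]]. apply H0; auto. apply (IH Y HY); auto.
Qed.

Lemma lindenbaum {T} (bad : list T -> Prop) (A0 : T -> Prop) : gcons bad A0 ->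
  exists M, gcons bad M /\ sub A0 M /\ forall x, ~ M x -> ~ gcons bad (ext1 M x).
Proof.
  intros H0. set (M := fun x => A0 x \/ exists A, Tw bad A0 A /\ A x).
  assert (HM : Tw bad A0 M) by (apply tw_sup; auto).
  exists M. split; [apply (tw_cons bad A0); auto|split].
  - intros x Hx; left; auto.
  - apply gstep_max. intros x Hx. right. exists (gstep bad M). split; auto. apply tw_step; auto.
Qed.


Arguments beval {P}. Arguments Imp {P}. Arguments Or {P}. Arguments Iff {P}.
Arguments Top {P}. Arguments bigAnd {P}. Arguments PrfK4 {P}.

Lemma beval_top {P} (v : form P -> bool) p0 : beval v (Top p0) = true.
Proof. simpl. destruct (v (Var p0)); reflexivity. Qed.

Lemma beval_bigAnd {P} (v : form P -> bool) p0 l :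
  beval v (bigAnd p0 l) = true <-> forall y, In y l -> beval v y = true.
Proof.
  induction l as [|a l IH]; simpl.
  - split; [intros _ y []|intros _; destruct (v (Var p0)); reflexivity].
  - rewrite andb_true_iff, IH. split.
    + intros [H1 H2] y [<-|Hy]; auto.
    + intros H; split; auto.
Qed.

Lemma prf_sem1 {P} p0 (A B : form P) :
  (forall v, beval v A = true -> beval v B = true) -> PrfK4 p0 A -> PrfK4 p0 B.
Proof.
  intros H HA. apply (r_mp P p0 A B); [|exact HA]. apply ax_taut. intro v. simpl.
  specialize (H v). destruct (beval v A), (beval v B); try reflexivity.
  specialize (H eq_refl); discriminate.
Qed.

Lemma prf_sem0 {P} p0 (B : form P) :
  (forall v, beval v B = true) -> PrfK4 p0 B.
Proof. intros H. apply ax_taut. exact H. Qed.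

Lemma prf_sem2 {P} p0 (A1 A2 B : form P) :
  (forall v, beval v A1 = true -> beval v A2 = true -> beval v B = true) ->
  PrfK4 p0 A1 -> PrfK4 p0 A2 -> PrfK4 p0 B.
Proof.
  intros H H1 H2. apply (r_mp P p0 A2 B); [|exact H2].
  apply (r_mp P p0 A1); [|exact H1]. apply ax_taut. intro v. simpl.
  specialize (H v). destruct (beval v A1), (beval v A2), (beval v B); try reflexivity;
  specialize (H eq_refl eq_refl); discriminate.
Qed.

Ltac bsolve := unfold Imp, Or, Iff in *; simpl in *;
  repeat match goal with
  | H : _ && _ = true |- _ => apply andb_true_iff in H; destruct H
  | |- context [beval ?v ?x] => destruct (beval v x)
  | |- context [?f ?x] => is_var f; match type of f with form _ -> bool => destruct (f x) end
  | H : context [?f ?x] |- _ => is_var f; match type of f with form _ -> bool => destruct (f x) end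
  | H : context [beval ?v ?x] |- _ => destruct (beval v x)
  end; simpl in *; try reflexivity; try discriminate;
  try (match goal with H : true = true -> false = true |- _ => specialize (H eq_refl); discriminate end); auto.

Definition bad {P} (p0 : P) (l : list (form P)) := PrfK4 p0 (Neg (bigAnd p0 l)).
Definition cons {P} (p0 : P) := gcons (bad p0).
Definition mcs {P} (p0 : P) (s : form P -> Prop) :=
  cons p0 s /\ forall x, ~ s x -> ~ cons p0 (ext1 s x).

Lemma filter_ex {T} (A : T -> Prop) x l : (forall y, In y l -> A y \/ y = x) ->
  exists m, (forall y, In y m -> A y) /\ forall y, In y l -> In y m \/ y = x.
Proof.
  induction l as [|a l IH]; intros H.
  - exists []. split; intros y [].
  - destruct IH as [m [Hm1 Hm2]]. { intros y Hy; apply H; right; auto. }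
    destruct (H a (or_introl eq_refl)) as [Ha|Ha].
    + exists (a :: m). split.
      * intros y [<-|Hy]; auto.
      * intros y [<-|Hy]; [left; left; auto|]. destruct (Hm2 y Hy); auto. left; right; auto.
    + exists m. split; auto. intros y [<-|Hy]; auto.
Qed.

Lemma not_cons_ext {P} (p0 : P) s x : ~ cons p0 (ext1 s x) ->
  exists m, (forall y, In y m -> s y) /\ PrfK4 p0 (Neg (And (bigAnd p0 m) x)).
Proof.
  intros H. unfold cons, gcons in H. apply not_all_ex_not in H. destruct H as [l H].
  apply imply_to_and in H. destruct H as [Hl Hb]. apply NNPP in Hb.
  destruct (filter_ex s x l Hl) as [m [Hm1 Hm2]]. exists m. split; auto.
  revert Hb. apply prf_sem1. intros v Hv. unfold bad in *. simpl in *.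
  apply negb_true_iff in Hv. apply negb_true_iff.
  destruct (beval v (bigAnd p0 m)) eqn:E1; auto. destruct (beval v x) eqn:E2; auto.
  exfalso. rewrite <- not_true_iff_false in Hv. apply Hv. apply beval_bigAnd.
  intros y Hy. destruct (Hm2 y Hy) as [H|<-]; auto. apply (proj1 (beval_bigAnd v p0 m) E1); auto.
Qed.

Lemma mcs_closed {P} (p0 : P) s l f : mcs p0 s -> (forall y, In y l -> s y) ->
  PrfK4 p0 (Imp (bigAnd p0 l) f) -> s f.
Proof.
  intros [Hc Hm] Hl Hp. apply NNPP. intro Hf.
  destruct (not_cons_ext p0 s f (Hm f Hf)) as [m [Hm1 Hm2]].
  apply (Hc (l ++ m)).
  - intros y Hy. apply in_app_or in Hy. destruct Hy; auto.
  - unfold bad. revert Hp Hm2. apply prf_sem2. intros v H1 H2. simpl in *.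
    apply negb_true_iff. apply not_true_iff_false. intros Hv.
    rewrite beval_bigAnd in Hv.
    assert (Hl' : beval v (bigAnd p0 l) = true) by (apply beval_bigAnd; intros; apply Hv, in_or_app; auto).
    assert (Hm' : beval v (bigAnd p0 m) = true) by (apply beval_bigAnd; intros; apply Hv, in_or_app; auto).
    rewrite Hl' in H1. rewrite Hm' in H2. simpl in *. destruct (beval v f); discriminate.
Qed.


Lemma mcs_prf {P} (p0 : P) s f : mcs p0 s -> PrfK4 p0 f -> s f.
Proof. intros Hs Hf. apply (mcs_closed p0 s []); [auto|intros y []|].
  revert Hf. apply prf_sem1. intros v H. simpl. rewrite H. destruct (v (Var p0)); reflexivity. Qed.

Lemma mcs_thm {P} (p0 : P) s a b : mcs p0 s -> PrfK4 p0 (Imp a b) -> s a -> s b.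
Proof. intros Hs Hf Ha. apply (mcs_closed p0 s [a]); [auto|intros y [<-|[]]; auto|].
  revert Hf. apply prf_sem1. intros v H. simpl in *. bsolve. Qed.

Lemma mcs_taut {P} (p0 : P) s a b : mcs p0 s -> (forall v, beval v a = true -> beval v b = true) -> s a -> s b.
Proof. intros Hs H. apply (mcs_thm p0); auto. apply prf_sem0. intros v. specialize (H v). bsolve. Qed.

Lemma mcs_mp {P} (p0 : P) s a b : mcs p0 s -> s (Imp a b) -> s a -> s b.
Proof. intros Hs H1 H2. apply (mcs_closed p0 s [a; Imp a b]).
  auto. intros y [<-|[<-|[]]]; auto. apply prf_sem0. intros v. bsolve. Qed.

Lemma mcs_not_both {P} (p0 : P) s a : mcs p0 s -> s a -> s (Neg a) -> False.
Proof. intros [Hc _] H1 H2. apply (Hc [a; Neg a]). intros y [<-|[<-|[]]]; auto.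
  apply prf_sem0. intros v. bsolve. Qed.

Lemma mcs_neg {P} (p0 : P) s a : mcs p0 s -> (s (Neg a) <-> ~ s a).
Proof. intros Hs. split.
  - intros H1 H2. eapply (mcs_not_both p0); eauto.
  - intros H. destruct Hs as [Hc Hm]. destruct (not_cons_ext p0 s a (Hm a H)) as [m [Hm1 Hm2]].
    apply (mcs_closed p0 s m); auto. split; auto. revert Hm2. apply prf_sem1. intros v.
    simpl. destruct (beval v (bigAnd p0 m)), (beval v a); auto. Qed.

Lemma mcs_and {P} (p0 : P) s a b : mcs p0 s -> (s (And a b) <-> s a /\ s b).
Proof. intros Hs. split.
  - intros H. split; apply (mcs_taut p0 s (And a b)); auto; intros v Hv; bsolve.
  - intros [H1 H2]. apply (mcs_closed p0 s [a; b]); auto. intros y [<-|[<-|[]]]; auto.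
    apply prf_sem0. intros v. bsolve. Qed.

Lemma mcs_or {P} (p0 : P) s a b : mcs p0 s -> (s (Or a b) <-> s a \/ s b).
Proof. intros Hs. unfold Or. rewrite (mcs_neg p0 s _ Hs), (mcs_and p0 s _ _ Hs),
  (mcs_neg p0 s _ Hs), (mcs_neg p0 s _ Hs). tauto. Qed.

Lemma mcs_imp {P} (p0 : P) s a b : mcs p0 s -> s (Imp a b) -> s a -> s b.
Proof. apply (mcs_mp p0). Qed.

Lemma mcs_iff {P} (p0 : P) s a b : mcs p0 s -> s (Iff a b) -> (s a <-> s b).
Proof. intros Hs H. unfold Iff in H. apply (mcs_and p0 s _ _ Hs) in H. destruct H.
  split; intro; eapply (mcs_mp p0); eauto. Qed.

Lemma mcs_re {P} (p0 : P) s a b : mcs p0 s -> PrfK4 p0 (Iff a b) -> s (Box a) -> s (Box b).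
Proof. intros Hs H Ha. apply r_re in H. apply (mcs_prf p0 s _ Hs) in H.
  apply (mcs_iff p0 s _ _ Hs H); auto. Qed.

Lemma mcs_re_t {P} (p0 : P) s a b : mcs p0 s -> (forall v, beval v a = beval v b) -> s (Box a) -> s (Box b).
Proof. intros Hs H. apply (mcs_re p0); auto. apply prf_sem0. intros v. unfold Iff, Imp; simpl. rewrite (H v). bsolve. Qed.

Lemma box_and {P} (p0 : P) s a b : mcs p0 s -> s (Box a) -> s (Box b) -> s (Box (And a b)).
Proof. intros Hs H1 H2. eapply (mcs_mp p0); [auto|apply (mcs_prf p0); [auto|apply ax_and]|].
  apply (proj2 (mcs_and p0 s _ _ Hs)); auto. Qed.

Lemma box_neg {P} (p0 : P) s a : mcs p0 s -> (s (Box a) <-> s (Box (Neg a))).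
Proof. intros Hs. apply (mcs_iff p0); auto. apply (mcs_prf p0); auto. apply ax_neg. Qed.

Lemma box_or_ax {P} (p0 : P) s f g h : mcs p0 s -> s (Box f) ->
  s (Box (Or f g)) \/ s (Box (Or (Neg f) h)).
Proof. intros Hs H. apply (proj1 (mcs_or p0 s _ _ Hs)). apply (mcs_mp p0 s (Box f)); auto. apply (mcs_prf p0); auto. apply ax_or. Qed.

Definition Nec {P} (s : form P -> Prop) psi := forall chi, s (Box (Or chi psi)).
Definition Rc {P} (s t : form P -> Prop) := (exists chi, ~ s (Box chi)) /\ forall psi, Nec s psi -> t psi.

Lemma nec_of {P} (p0 : P) s f chi : mcs p0 s -> s (Box f) -> s (Box (Or f chi)) -> ~ s (Box chi) -> Nec s f.
Proof. intros Hs H1 H2 H3 chi'. destruct (box_or_ax p0 s f chi' chi Hs H1) as [H|H].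
  - revert H. apply (mcs_re_t p0); auto. intros v. bsolve.
  - exfalso. apply H3. assert (H4 := box_and p0 s _ _ Hs H2 H). revert H4. apply (mcs_re_t p0); auto.
    intros v; bsolve. Qed.

Lemma nec_box {P} (p0 : P) s f : mcs p0 s -> Nec s f -> s (Box f).
Proof. intros Hs H. specialize (H f). revert H. apply (mcs_re_t p0); auto. intros v; bsolve. Qed.

Lemma truth_box1 {P} (p0 : P) s t u phi : mcs p0 s -> mcs p0 t -> mcs p0 u -> s (Box phi) -> Rc s t -> Rc s u ->
  (t phi <-> u phi).
Proof. intros Hs Ht Hu H [[chi Hchi] Ht2] [_ Hu2].
  destruct (box_or_ax p0 s phi chi chi Hs H) as [H1|H1].
  - assert (N := nec_of p0 s phi chi Hs H H1 Hchi). split; auto.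
  - apply (box_neg p0 s) in H; auto.
    assert (N := nec_of p0 s (Neg phi) chi Hs H H1 Hchi).
    assert (N1 := Ht2 _ N). assert (N2 := Hu2 _ N).
    apply (mcs_neg p0 t _ Ht) in N1. apply (mcs_neg p0 u _ Hu) in N2. tauto. Qed.

Lemma nec_bigAnd {P} (p0 : P) s m : mcs p0 s -> (forall y, In y m -> Nec s y) -> Nec s (bigAnd p0 m).
Proof. intros Hs. induction m as [|a m IH]; intros H chi; simpl.
  - assert (Ht : s (Box (Top p0))) by (apply (mcs_prf p0); auto; apply ax_top). revert Ht.
    apply (mcs_re_t p0); auto. intros v; bsolve.
  - assert (H1 := H a (or_introl eq_refl) chi).
    assert (H2 := IH (fun y Hy => H y (or_intror Hy)) chi).
    assert (H3 := box_and p0 s _ _ Hs H1 H2). revert H3. apply (mcs_re_t p0); auto. intros v; bsolve. Qed.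

Lemma succ_ex {P} (p0 : P) s x : mcs p0 s -> ~ s (Box x) -> exists t, mcs p0 t /\ Rc s t /\ t x.
Proof. intros Hs Hx.
  assert (Hc : cons p0 (fun y => Nec s y \/ y = x)).
  { intros l Hl Hb. destruct (filter_ex (Nec s) x l Hl) as [m [Hm1 Hm2]].
    assert (N := nec_bigAnd p0 s m Hs Hm1 (Neg x)).
    apply Hx. apply (box_neg p0 s); auto. revert N. apply (mcs_re p0); auto. unfold bad in Hb.
    revert Hb. apply prf_sem1. intros v Hv. unfold Iff, Imp, Or. simpl in *.
    apply negb_true_iff in Hv. apply not_true_iff_false in Hv.
    destruct (beval v (bigAnd p0 m)) eqn:E1, (beval v x) eqn:E2; simpl; auto.
    exfalso; apply Hv. apply beval_bigAnd. intros y Hy. destruct (Hm2 y Hy) as [H|<-]; auto.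
    apply (proj1 (beval_bigAnd v p0 m) E1); auto. }
  destruct (lindenbaum (bad p0) _ Hc) as [M [HM1 [HM2 HM3]]].
  exists M. split; [split; auto|split].
  - split; [exists x; auto|]. intros psi Hp. apply HM2; auto.
  - apply HM2; auto.
Qed.

Lemma Rc_trans {P} (p0 : P) s t u : mcs p0 s -> Rc s t -> Rc t u -> Rc s u.
Proof. intros Hs [H1 H2] [H3 H4]. split; auto. intros psi Hp. apply H4. intros chi'.
  apply H2. intros chi. assert (Hb : s (Box (Or chi' psi))) by apply Hp.
  assert (H5 : s (Box (Or (Box (Or chi' psi)) chi))).
  { eapply (mcs_mp p0); eauto. apply (mcs_prf p0); auto. apply ax_4. }
  revert H5. apply (mcs_re_t p0); auto. intros v; bsolve. Qed.

Arguments sat {P S}.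

Lemma sat_iff_elim {P S} R1 R2 V (s : S) (a b : form P) : sat R1 R2 V s (Iff a b) -> (sat R1 R2 V s a <-> sat R1 R2 V s b).
Proof. simpl. intros [H1 H2]. destruct (classic (sat R1 R2 V s a)), (classic (sat R1 R2 V s b)); tauto. Qed.

Lemma sound {P} (p0 : P) {S} (R1 R2 : S -> S -> Prop) V : quasi_transitive R1 R2 ->
  forall f, PrfK4 p0 f -> forall s, sat R1 R2 V s f.
Proof.
  intros Hqt f Hf. induction Hf as [f Ht| | f | f g | f g h | f g | f g Hfg IH1 Hf IH2 | f g Hfg IH]; intros s.
  - set (v := fun g => if excluded_middle_informative (sat R1 R2 V s g) then true else false).
    assert (Hv : forall g, beval v g = true <-> sat R1 R2 V s g).
    { induction g as [p|a IHa|a IHa b IHb|a IHa]; simpl.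
      - unfold v. destruct excluded_middle_informative; split; auto; discriminate.
      - rewrite negb_true_iff, <- not_true_iff_false, IHa. tauto.
      - rewrite andb_true_iff, IHa, IHb. tauto.
      - unfold v. destruct excluded_middle_informative as [e|n]; split; auto; try discriminate.
    }
    apply Hv, Ht.
  - simpl. intros t u _ _. tauto.
  - simpl. split; intros [H1 H2]; apply H2; intros t u Ht Hu; specialize (H1 t u Ht Hu);
    destruct (classic (sat R1 R2 V t f)), (classic (sat R1 R2 V u f)); tauto.
  - simpl. intros [[H1 H2] H3]; apply H3; intros t u Ht Hu; specialize (H1 t u Ht Hu); specialize (H2 t u Ht Hu); tauto.
  - simpl. intros [H1 H2]. apply H2. intros [H3 H4]. apply H3. intros t u Ht Hu.
    destruct (classic (sat R1 R2 V t f)) as [Hf|Hf].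
    + assert (Hu' : sat R1 R2 V u f) by (apply (H1 t u Ht Hu); auto). tauto.
    + exfalso. assert (Hu' : ~ sat R1 R2 V u f) by (rewrite <- (H1 t u Ht Hu); auto).
      apply H4. intros t' u' Ht' Hu'2.
      assert (A1 : ~ sat R1 R2 V t' f) by (rewrite (H1 t' u Ht' Hu); auto).
      assert (A2 : ~ sat R1 R2 V u' f) by (rewrite <- (H1 t u' Ht Hu'2); auto).
      tauto.
  - simpl. intros [H1 H2]. apply H2. intros t u Ht Hu.
    assert (Bt : forall t' t'', R1 t t' -> R2 t t'' -> (sat R1 R2 V t' f <-> sat R1 R2 V t'' f)).
    { intros t' t'' H' H''. apply H1. exact (Hqt true true s t t' Ht H'). exact (Hqt true false s t t'' Ht H''). }
    assert (Bu : forall t' t'', R1 u t' -> R2 u t'' -> (sat R1 R2 V t' f <-> sat R1 R2 V t'' f)).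
    { intros t' t'' H' H''. apply H1. exact (Hqt false true s u t' Hu H'). exact (Hqt false false s u t'' Hu H''). }
    tauto.
  - specialize (IH1 s). specialize (IH2 s). simpl in IH1. destruct (classic (sat R1 R2 V s g)); tauto.
  - assert (E : forall x, sat R1 R2 V x f <-> sat R1 R2 V x g) by (intros x; apply sat_iff_elim, IH).
    simpl. split; intros [H1 H2]; apply H2; intros t u Ht Hu; specialize (H1 t u Ht Hu); rewrite ?E in *; rewrite <- ?E in *; auto.
Qed.

Definition CS {P} (p0 : P) := {s : form P -> Prop | mcs p0 s}.
Definition CR {P} (p0 : P) (a b : CS p0) := Rc (proj1_sig a) (proj1_sig b).
Definition CV {P} (p0 : P) (p : P) (a : CS p0) := proj1_sig a (Var p).

Lemma truth {P} (p0 : P) : forall f (a : CS p0), sat (CR p0) (CR p0) (CV p0) a f <-> proj1_sig a f.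
Proof.
  induction f as [p|f IH|f IHf g IHg|f IH]; intros [s Hs]; simpl in *.
  - unfold CV; simpl; tauto.
  - rewrite (IH (exist _ s Hs)). simpl. rewrite (mcs_neg p0 s _ Hs). tauto.
  - rewrite (IHf (exist _ s Hs)), (IHg (exist _ s Hs)). simpl. rewrite (mcs_and p0 s _ _ Hs). tauto.
  - split.
    + intros H. apply NNPP. intros Hn.
      destruct (succ_ex p0 s f Hs Hn) as [t [Ht [Rt Hft]]].
      assert (Hn' : ~ s (Box (Neg f))) by (rewrite <- (box_neg p0 s f Hs); auto).
      destruct (succ_ex p0 s (Neg f) Hs Hn') as [u [Hu [Ru Hfu]]].
      specialize (H (exist _ t Ht) (exist _ u Hu) Rt Ru).
      rewrite (IH (exist _ t Ht)), (IH (exist _ u Hu)) in H. simpl in H.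
      apply (mcs_neg p0 u _ Hu) in Hfu. tauto.
    + intros H [t Ht] [u Hu] Rt Ru. rewrite (IH (exist _ t Ht)), (IH (exist _ u Hu)). simpl.
      apply (truth_box1 p0 s t u f Hs Ht Hu H Rt Ru).
Qed.

Theorem mainTheorem19 (P : Type) (p0 : P) (Gamma : form P -> Prop) (phi : form P) :
  (derivK4 P p0 Gamma phi <-> conseq_qt P Gamma phi) /\
  (conseq_qt P Gamma phi <-> conseq_pt P Gamma phi).
Proof.
  assert (A : derivK4 P p0 Gamma phi -> conseq_qt P Gamma phi).
  { intros [l [Hl Hp]] S R1 R2 V s Hqt HG.
    assert (H := sound p0 R1 R2 V Hqt _ Hp s). simpl in H.
    assert (Hb : forall l', (forall g, In g l' -> Gamma g) -> sat R1 R2 V s (bigAnd p0 l')).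
    { induction l' as [|a l' IHl]; intros Hl'; simpl.
      - tauto.
      - split; [apply HG, Hl'; left; auto|]. apply IHl. intros; apply Hl'; right; auto. }
    specialize (Hb l Hl). destruct (classic (sat R1 R2 V s phi)); tauto. }
  assert (B : conseq_qt P Gamma phi -> conseq_pt P Gamma phi).
  { intros H S R1 R2 V s Hpt HG. apply H; auto. intros i j x y z H1 H2.
    destruct (Hpt i j x y z H1 H2). destruct j; auto. }
  assert (C : conseq_pt P Gamma phi -> derivK4 P p0 Gamma phi).
  { intros H. apply NNPP. intros Hn.
    assert (Hc : cons p0 (fun y => Gamma y \/ y = Neg phi)).
    { intros l Hl Hb. destruct (filter_ex Gamma (Neg phi) l Hl) as [m [Hm1 Hm2]].
      apply Hn. exists m. split; auto. revert Hb. apply prf_sem1. intros v Hv. unfold bad in *.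
      unfold Imp. simpl in *. apply negb_true_iff in Hv. apply not_true_iff_false in Hv.
      destruct (beval v (bigAnd p0 m)) eqn:E1, (beval v phi) eqn:E2; simpl; auto.
      exfalso; apply Hv. apply beval_bigAnd. intros y Hy. destruct (Hm2 y Hy) as [H' | ->].
      - apply (proj1 (beval_bigAnd v p0 m) E1); auto.
      - simpl. rewrite E2. reflexivity. }
    destruct (lindenbaum (bad p0) _ Hc) as [M [HM1 [HM2 HM3]]].
    assert (HM : mcs p0 M) by (split; auto).
    assert (Hpt : pseudo_transitive (CR p0) (CR p0)).
    { intros i j x y z H1 H2. destruct i, j; simpl in *;
      assert (Hxz : CR p0 x z) by (apply (Rc_trans p0 _ (proj1_sig y)); auto; apply (proj2_sig x)); auto. }
    specialize (H (CS p0) (CR p0) (CR p0) (CV p0) (exist _ M HM) Hpt).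
    assert (Hphi : M phi).
    { apply (truth p0 phi (exist _ M HM)). apply H. intros g Hg.
      apply (truth p0 g (exist _ M HM)). simpl. apply HM2. left; auto. }
    apply (proj1 (mcs_neg p0 M phi HM)); [apply HM2; right; reflexivity | exact Hphi]. }
  split; split; auto.
Qed.
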